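(* Let $G=(V,E)$ be a finite graph, $\psi\in C^1((0,\infty))$ and $d>0$. The following are equivalent: (1) $G$ satisfies the $CD\psi(d,0)$ inequality. (2) For every positive solution $u$ to the heat equation on $G$ and all $t\ge 0$, \[ \mathcal{L}\left(-u\,\Delta^\psi u\right)\ \ge\ \frac{2}{d}\,u\,\left(\Delta^\psi u\right)^2 . \]
   Context: A finite graph $G=(V,E)$ consists of a finite set $V$ and an irreflexive symmetric relation $E\subset V\times V$; write $v\sim w$ if $(v,w)\in E$. $C(V)$ denotes real functions on $V$, $C^+(V)$ the positive ones. Laplacian: $\Delta f(v)=\sum_{w\sim v}(f(w)-f(v))$. For $\psi\in C^1((0,\infty))$, $f\in C^+(V)$: $(\Delta^\psi f)(v):=\Delta\big[\psi\big(\tfrac{f}{f(v)}\big)\big](v)$; $(\Omega^\psi f)(v):=\Delta\Big[\psi'\big(\tfrac{f}{f(v)}\big)\cdot\tfrac{f}{f(v)}\cdot\big(\tfrac{\Delta f}{f}-\tfrac{(\Delta f)(v)}{f(v)}\big)\Big](v)$; $2\Gamma_2^\psi(f):=\Omega^\psi f+\frac{\Delta f\,\Delta^\psi f}{f}-\frac{\Delta(f\,\Delta^\psi f)}{f}$. $G$ satisfies $CD\psi(d,0)$ if $\Gamma_2^\psi(f)\ge\frac1d(\Delta^\psi f)^2$ pointwise for all $f\in C^+(V)$. The heat operator is $\mathcal{L}(u)=\Delta u-\partial_t u$; a solution to the heat equation on $G$ is a function $u:V\times[0,\infty)\to\mathbb{R}$, continuously differentiable in $t$, with $\mathcal{L}(u)=0$.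 Operators $\Delta^\psi,\Gamma_2^\psi$ applied to $u$ act on $u(\cdot,t)$ for each fixed $t$. *)

(* Defs.v *)
From Stdlib Require Import Reals List.
Open Scope R_scope.

Record fgraph := {
  V : Type;
  verts : list V;
  verts_nodup : NoDup verts;
  verts_all : forall v : V, In v verts;
  adj : V -> V -> bool;
  adj_sym : forall v w, adj v w = adj w v;
  adj_irrefl : forall v, adj v v = false
}.

Definition sumV (G : fgraph) (F : V G -> R) : R :=
  fold_right (fun v acc => F v + acc) 0 (verts G).

Definition lap (G : fgraph) (f : V G -> R) (v : V G) : R :=
  sumV G (fun w => if adj G v w then f w - f v else 0).

Definition lap_psi (G : fgraph) (psi : R -> R) (f : V G -> R) (v : V G) : R :=
  lap G (fun w => psi (f w / f v)) v.

Definition Omega_psi (G : fgraph) (dpsi : R -> R) (f : V G -> R) (v : V G) : R :=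
  lap G (fun w => dpsi (f w / f v) * (f w / f v)
                  * (lap G f w / f w - lap G f v / f v)) v.

Definition Gamma2_psi (G : fgraph) (psi dpsi : R -> R) (f : V G -> R) (v : V G) : R :=
  / 2 * (Omega_psi G dpsi f v
         + lap G f v * lap_psi G psi f v / f v
         - lap G (fun w => f w * lap_psi G psi f w) v / f v).

Definition CD_psi (G : fgraph) (psi dpsi : R -> R) (d : R) : Prop :=
  forall f : V G -> R, (forall v, 0 < f v) ->
    forall v, Gamma2_psi G psi dpsi f v >= / d * (lap_psi G psi f v) ^ 2.

Definition C1_pos (psi dpsi : R -> R) : Prop :=
  (forall x, 0 < x -> derivable_pt_lim psi x (dpsi x)) /\
  (forall x, 0 < x -> continuity_pt dpsi x).

Definition deriv_nonneg (g : R -> R) (t l : R) : Prop :=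
  forall eps, 0 < eps -> exists delta, 0 < delta /\
    forall h, h <> 0 -> Rabs h < delta -> 0 <= t + h ->
      Rabs ((g (t + h) - g t) / h - l) < eps.

Definition cont_nonneg (g : R -> R) (t : R) : Prop :=
  forall eps, 0 < eps -> exists delta, 0 < delta /\
    forall s, 0 <= s -> Rabs (s - t) < delta -> Rabs (g s - g t) < eps.

(* u : V × [0,∞) → R, continuously differentiable in t, with Δu - ∂_t u = 0
   (values of u at negative times are irrelevant). *)
Definition heat_solution (G : fgraph) (u : V G -> R -> R) : Prop :=
  exists ut : V G -> R -> R,
    (forall v t, 0 <= t -> deriv_nonneg (u v) t (ut v t)) /\
    (forall v t, 0 <= t -> cont_nonneg (ut v) t) /\
    (forall v t, 0 <= t -> lap G (fun w => u w t) v - ut v t = 0).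

(* Main.v *)
Require Import Defs.
From Coquelicot Require Import Coquelicot.
From Stdlib Require Import Reals Lra List FunctionalExtensionality.
Open Scope R_scope.

Definition fsum {A} (l : list A) (F : A -> R) : R :=
  fold_right (fun v acc => F v + acc) 0 l.

Lemma fsum_ext {A} (l : list A) F H : (forall x, F x = H x) -> fsum l F = fsum l H.
Proof. intros E; induction l; simpl; [reflexivity| rewrite E, IHl; reflexivity]. Qed.

Lemma fsum_plus {A} (l : list A) F H : fsum l (fun x => F x + H x) = fsum l F + fsum l H.
Proof. induction l; simpl; [ring| rewrite IHl; ring]. Qed.

Lemma fsum_scal {A} (l : list A) c F : fsum l (fun x => c * F x) = c * fsum l F.
Proof. induction l; simpl; [ring| rewrite IHl; ring]. Qed.

Lemma fsum_const {A} (l : list A) c : fsum l (fun _ => c) = INR (length l) * c.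
Proof. induction l; simpl length; [simpl; ring| rewrite S_INR; simpl; rewrite IHl; ring]. Qed.

Lemma fsum_le {A} (l : list A) F H : (forall x, F x <= H x) -> fsum l F <= fsum l H.
Proof. intros E; induction l; unfold fsum in *; simpl; [lra| specialize (E a); lra]. Qed.

Lemma fsum_nonneg {A} (l : list A) F : (forall x, 0 <= F x) -> 0 <= fsum l F.
Proof. intros E; induction l; unfold fsum in *; simpl; [lra| specialize (E a); lra]. Qed.

Lemma fsum_In_le {A} (l : list A) F x : (forall x, 0 <= F x) -> In x l -> F x <= fsum l F.
Proof.
  intros E; induction l; unfold fsum in *; simpl; [tauto|]. intros [->|Hi].
  - pose proof (fsum_nonneg l F E) as HH; unfold fsum in HH; lra.
  - specialize (IHl Hi); specialize (E a); lra.
Qed.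

Lemma fsum_deriv {A} (l : list A) (F : A -> R -> R) dF t :
  (forall x, derivable_pt_lim (F x) t (dF x)) ->
  derivable_pt_lim (fun s => fsum l (fun x => F x s)) t (fsum l dF).
Proof.
  intros E; induction l; simpl.
  - apply derivable_pt_lim_const.
  - apply (derivable_pt_lim_plus (F a) (fun s => fsum l (fun x => F x s))); auto.
Qed.

Lemma fsum_cont {A} (l : list A) (F : A -> R -> R) t :
  (forall x, continuity_pt (F x) t) ->
  continuity_pt (fun s => fsum l (fun x => F x s)) t.
Proof.
  intros E; induction l; simpl.
  - apply continuity_pt_const; intros ? ?; reflexivity.
  - apply (continuity_pt_plus (F a) (fun s => fsum l (fun x => F x s))); auto.
Qed.

Lemma lap_ext G g h v : (forall w, g w = h w) -> lap G g v = lap G h v.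
Proof.
  intros E; unfold lap, sumV; apply (fsum_ext (verts G)); intros w.
  rewrite !E; reflexivity.
Qed.

Lemma lap_scal G c g v : lap G (fun w => c * g w) v = c * lap G g v.
Proof.
  unfold lap, sumV. change (fsum (verts G) (fun w => if adj G v w then c * g w - c * g v else 0)
   = c * fsum (verts G) (fun w => if adj G v w then g w - g v else 0)).
  rewrite <- fsum_scal; apply fsum_ext; intros w; destruct (adj G v w); ring.
Qed.

(* one-sided to two-sided via reflection *)
Definition ext (g : R -> R) (s : R) : R :=
  if Rle_dec 0 s then g s else 2 * g 0 - g (- s).

Lemma ext_eq g s : 0 <= s -> ext g s = g s.
Proof. intros H; unfold ext; destruct (Rle_dec 0 s); [reflexivity| lra]. Qed.

Lemma ext_deriv g t l : 0 <= t -> deriv_nonneg g t l -> derivable_pt_lim (ext g) t l.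
Proof.
  intros Ht D eps Heps. destruct (D eps Heps) as [del [Hd Hq]].
  destruct (Rle_lt_or_eq_dec 0 t Ht) as [Hlt|Heq].
  - assert (Hm : 0 < Rmin del t) by (apply Rmin_pos; lra).
    exists (mkposreal _ Hm); simpl; intros h Hh Ha.
    assert (Ha1 : Rabs h < del) by (eapply Rlt_le_trans; [exact Ha| apply Rmin_l]).
    assert (Ha2 : Rabs h < t) by (eapply Rlt_le_trans; [exact Ha| apply Rmin_r]).
    assert (0 <= t + h) by (apply Rabs_def2 in Ha2; lra).
    rewrite !ext_eq by lra. apply Hq; auto.
  - subst t. exists (mkposreal _ Hd); simpl; intros h Hh Ha.
    destruct (Rle_dec 0 h) as [Hp|Hn].
    + rewrite !ext_eq by lra. apply Hq; auto; lra.
    + unfold ext. destruct (Rle_dec 0 (0 + h)); [lra|]. destruct (Rle_dec 0 0); [|lra].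
      replace ((2 * g 0 - g (- (0 + h)) - g 0) / h) with ((g (0 + - h) - g 0) / - h).
      * apply Hq; [lra| rewrite Rabs_Ropp; auto| lra].
      * replace (- (0 + h)) with (0 + - h) by ring. field. lra.
Qed.

Lemma deriv_back h k t l : 0 <= t -> derivable_pt_lim h t l ->
  (forall s, 0 <= s -> h s = k s) -> deriv_nonneg k t l.
Proof.
  intros Ht D E eps Heps. destruct (D eps Heps) as [del Hd].
  exists del; split; [apply cond_pos|]. intros hh H1 H2 H3.
  rewrite <- !E by lra. apply Hd; auto.
Qed.

Lemma deriv_unique g t l1 l2 : 0 <= t -> deriv_nonneg g t l1 -> deriv_nonneg g t l2 -> l1 = l2.
Proof.
  intros Ht D1 D2. apply Rle_antisym; apply Rnot_lt_le; intros Hl.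
  - set (e := (l1 - l2) / 2).
    destruct (D1 e ltac:(unfold e; lra)) as [d1 [Hd1 Q1]].
    destruct (D2 e ltac:(unfold e; lra)) as [d2 [Hd2 Q2]].
    set (h := Rmin d1 d2 / 2).
    assert (0 < Rmin d1 d2) by (apply Rmin_pos; lra).
    assert (Hh : 0 < h) by (unfold h; lra).
    assert (Rabs h < d1) by (rewrite Rabs_pos_eq by lra; unfold h; pose proof (Rmin_l d1 d2); lra).
    assert (Rabs h < d2) by (rewrite Rabs_pos_eq by lra; unfold h; pose proof (Rmin_r d1 d2); lra).
    specialize (Q1 h ltac:(lra) ltac:(auto) ltac:(lra)).
    specialize (Q2 h ltac:(lra) ltac:(auto) ltac:(lra)).
    apply Rabs_def2 in Q1; apply Rabs_def2 in Q2. unfold e in *; lra.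
  - set (e := (l2 - l1) / 2).
    destruct (D1 e ltac:(unfold e; lra)) as [d1 [Hd1 Q1]].
    destruct (D2 e ltac:(unfold e; lra)) as [d2 [Hd2 Q2]].
    set (h := Rmin d1 d2 / 2).
    assert (0 < Rmin d1 d2) by (apply Rmin_pos; lra).
    assert (Hh : 0 < h) by (unfold h; lra).
    assert (Rabs h < d1) by (rewrite Rabs_pos_eq by lra; unfold h; pose proof (Rmin_l d1 d2); lra).
    assert (Rabs h < d2) by (rewrite Rabs_pos_eq by lra; unfold h; pose proof (Rmin_r d1 d2); lra).
    specialize (Q1 h ltac:(lra) ltac:(auto) ltac:(lra)).
    specialize (Q2 h ltac:(lra) ltac:(auto) ltac:(lra)).
    apply Rabs_def2 in Q1; apply Rabs_def2 in Q2. unfold e in *; lra.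
Qed.

Lemma sumV_fsum G F : sumV G F = fsum (verts G) F.
Proof. reflexivity. Qed.

Lemma lap_fsum G f v : lap G f v = fsum (verts G) (fun w => if adj G v w then f w - f v else 0).
Proof. reflexivity. Qed.

Lemma key G psi dpsi (u ut : V G -> R -> R) :
  C1_pos psi dpsi ->
  (forall v t, 0 <= t -> deriv_nonneg (u v) t (ut v t)) ->
  (forall v t, 0 <= t -> ut v t = lap G (fun w => u w t) v) ->
  (forall v t, 0 <= t -> 0 < u v t) ->
  forall t, 0 <= t -> forall v,
  deriv_nonneg (fun s => - u v s * lap_psi G psi (fun w => u w s) v) t
    (- (lap G (fun w => u w t) v * lap_psi G psi (fun w => u w t) v
        + u v t * Omega_psi G dpsi (fun w => u w t) v)).
Proof.
  intros [Hpsi _] Hd Hl Hp t Ht v.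
  set (U := fun w => ext (u w)).
  assert (DU : forall w, derivable_pt_lim (U w) t (ut w t)) by (intros; apply ext_deriv; auto).
  assert (EU : forall w s, 0 <= s -> U w s = u w s) by (intros; apply ext_eq; auto).
  assert (Hpos: forall w, 0 < U w t) by (intros; rewrite EU; auto).
  set (T := fun w s => if adj G v w then psi (U w s / U v s) - psi (U v s / U v s) else 0).
  set (dT := fun w => if adj G v w then dpsi (U w t / U v t) * ((ut w t * U v t - ut v t * U w t) / (U v t)²) - dpsi (U v t / U v t) * ((ut v t * U v t - ut v t * U v t)/(U v t)²) else 0).
  assert (DT : forall w, derivable_pt_lim (T w) t (dT w)).
  { intros w. unfold T, dT. destruct (adj G v w).
    - assert (Hq : forall a, derivable_pt_lim (fun s => psi (U a s / U v s)) t
                  (dpsi (U a t / U v t) * ((ut a t * U v t - ut v t * U a t) / (U v t)²))).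
      { intros a. apply (derivable_pt_lim_comp (fun s => U a s / U v s) psi).
        - apply (derivable_pt_lim_div (U a) (U v)); auto. specialize (Hpos v); lra.
        - apply Hpsi. apply Rdiv_lt_0_compat; auto. }
      apply (derivable_pt_lim_minus (fun s => psi (U w s / U v s)) (fun s => psi (U v s / U v s))); auto.
    - apply derivable_pt_lim_const. }
  assert (E1 : fsum (verts G) (fun w => T w t) = lap_psi G psi (fun w => u w t) v).
  { unfold lap_psi; rewrite lap_fsum. apply fsum_ext; intro w; unfold T; rewrite !EU by auto; reflexivity. }
  assert (E2 : fsum (verts G) dT = Omega_psi G dpsi (fun w => u w t) v).
  { unfold Omega_psi; rewrite lap_fsum. apply fsum_ext; intro w; unfold dT.
    rewrite !EU by auto. rewrite !Hl by auto. destruct (adj G v w); [|reflexivity].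
    pose proof (Hp v t Ht); pose proof (Hp w t Ht). unfold Rsqr. field; lra. }
  apply (deriv_back (fun s => - U v s * fsum (verts G) (fun w => T w s))).
  - auto.
  - replace (- (lap G (fun w => u w t) v * lap_psi G psi (fun w => u w t) v
        + u v t * Omega_psi G dpsi (fun w => u w t) v))
      with ((- ut v t) * fsum (verts G) (fun w => T w t) + (- U v t) * fsum (verts G) dT).
    + apply (derivable_pt_lim_mult (fun s => - U v s) (fun s => fsum (verts G) (fun w => T w s))).
      * apply (derivable_pt_lim_opp (U v)); auto.
      * apply fsum_deriv; auto.
    + rewrite E1, E2, Hl, EU by auto. ring.
  - intros s Hs. unfold lap_psi; rewrite lap_fsum. rewrite EU by auto. f_equal.
    apply fsum_ext; intro w; unfold T; rewrite !EU by auto; reflexivity.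
Qed.

Lemma ident G psi dpsi f v : 0 < f v ->
  lap G (fun w => - f w * lap_psi G psi f w) v
  - (- (lap G f v * lap_psi G psi f v + f v * Omega_psi G dpsi f v))
  = 2 * f v * Gamma2_psi G psi dpsi f v.
Proof.
  intros Hf.
  rewrite (lap_ext G _ (fun w => (-1) * (f w * lap_psi G psi f w))) by (intros; ring).
  rewrite lap_scal. unfold Gamma2_psi. field; lra.
Qed.

Lemma cont_conv g t : continuity_pt g t -> cont_nonneg g t.
Proof.
  intros H eps He. destruct (H eps He) as [a [Ha Hb]]. exists a; split; [lra|].
  intros s _ Hs. destruct (Req_dec s t) as [->|Hne].
  - rewrite Rminus_diag, Rabs_R0; lra.
  - apply (Hb s). split; [split; [exact I| auto]| exact Hs].
Qed.

Definition Mop (G : fgraph) (g : V G -> R) (v : V G) : R :=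
  sumV G (fun w => if adj G v w then g w else g v).
Definition Mn G f n := Nat.iter n (Mop G) f.
Definition NN G := INR (length (verts G)).
Definition coef G f (v : V G) n := / INR (Factorial.fact n) * Mn G f n v.
Definition Wf G f (v : V G) t := PSeries (coef G f v) t.
Definition Uf G f (v : V G) t := exp (- NN G * t) * Wf G f v t.

Lemma Mop_lap G g v : Mop G g v = lap G g v + NN G * g v.
Proof.
  unfold Mop, NN; rewrite sumV_fsum, lap_fsum, <- fsum_const, <- fsum_plus.
  apply fsum_ext; intro w; destruct (adj G v w); ring.
Qed.

Lemma Mop_nonneg G g v : (forall w, 0 <= g w) -> 0 <= Mop G g v.
Proof. intros; unfold Mop; rewrite sumV_fsum; apply fsum_nonneg; intro w; destruct (adj G v w); auto. Qed.

Lemma NN_pos G : 0 <= NN G.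
Proof. apply pos_INR. Qed.

Lemma Mop_sum G g : (forall w, 0 <= g w) -> sumV G (Mop G g) <= 2 * NN G * sumV G g.
Proof.
  intros Hg. rewrite !sumV_fsum.
  apply Rle_trans with (fsum (verts G) (fun v => fsum (verts G) g + NN G * g v)).
  - apply fsum_le; intro v. unfold Mop; rewrite sumV_fsum.
    unfold NN; rewrite <- fsum_const, <- fsum_plus. apply fsum_le; intro w.
    pose proof (Hg w); pose proof (Hg v); destruct (adj G v w); lra.
  - rewrite fsum_plus, fsum_const, fsum_scal. unfold NN. lra.
Qed.

Lemma Mn_nonneg G f : (forall w, 0 <= f w) -> forall n v, 0 <= Mn G f n v.
Proof. intros Hf n; induction n; intros v; simpl; auto. apply Mop_nonneg; auto. Qed.

Lemma Mn_sum G f : (forall w, 0 <= f w) -> forall n, sumV G (Mn G f n) <= (2 * NN G) ^ n * sumV G f.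
Proof.
  intros Hf n; induction n; simpl.
  - lra.
  - eapply Rle_trans; [apply Mop_sum; apply Mn_nonneg; auto|].
    pose proof (NN_pos G). apply Rle_trans with (2*NN G*((2*NN G)^n * sumV G f)); [apply Rmult_le_compat_l; lra| right; ring].
Qed.

Lemma Mn_le G f : (forall w, 0 <= f w) -> forall n v, Mn G f n v <= (2 * NN G) ^ n * sumV G f.
Proof.
  intros Hf n v. eapply Rle_trans; [|apply Mn_sum; auto].
  rewrite sumV_fsum. apply fsum_In_le; [apply Mn_nonneg; auto| apply verts_all].
Qed.

Lemma cv G f v r : (forall w, 0 <= f w) -> CV_disk (coef G f v) r.
Proof.
  intros Hf. unfold CV_disk.
  apply (@ex_series_le R_AbsRing R_CompleteNormedModule _ (fun n => sumV G f * (/ INR (Factorial.fact n) * (2 * NN G * Rabs r) ^ n))).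
  - intro n. change (norm (Rabs (coef G f v n * r ^ n))) with (Rabs (Rabs (coef G f v n * r ^ n))).
    rewrite Rabs_Rabsolu, Rabs_mult, <- RPow_abs.
    unfold coef. pose proof (Mn_nonneg G f Hf n v). pose proof (Mn_le G f Hf n v).
    assert (0 < / INR (Factorial.fact n)) by (apply Rinv_0_lt_compat, INR_fact_lt_0).
    rewrite Rabs_pos_eq by (apply Rmult_le_pos; lra).
    rewrite Rpow_mult_distr.
    pose proof (pow_le (Rabs r) n (Rabs_pos r)).
    apply Rle_trans with (/ INR (Factorial.fact n) * ((2 * NN G) ^ n * sumV G f) * Rabs r ^ n).
    + apply Rmult_le_compat_r; auto. apply Rmult_le_compat_l; lra.
    + right; ring.
  - pose proof (is_exp_Reals (2 * NN G * Rabs r)) as He.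
    assert (Hx : ex_series (fun k => scal (pow_n (2 * NN G * Rabs r) k) (/ INR (Factorial.fact k)))) by (eexists; exact He).
    apply (ex_series_scal_l (sumV G f)) in Hx.
    eapply ex_series_ext; [|exact Hx]. intro n. simpl. rewrite pow_n_pow.
    change (scal ?a ?b) with (a * b); try change (scal ?a ?b) with (a * b); ring.
Qed.

Lemma rad G f v t : (forall w, 0 <= f w) -> Rbar_lt (Rabs t) (CV_radius (coef G f v)).
Proof.
  intros Hf. pose proof (proj1 (Lub_Rbar_correct (CV_disk (coef G f v))) (Rabs t + 1) (cv G f v _ Hf)) as H.
  change (Rbar_le (Rabs t + 1) (CV_radius (coef G f v))) in H.
  destruct (CV_radius (coef G f v)); simpl in *; auto; lra.
Qed.

Lemma is_pseries_zero t : is_pseries (fun _ : nat => 0) t 0.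
Proof.
  pose proof (@is_pseries_scal R_AbsRing R_NormedModule 0 (fun n => / INR (Factorial.fact n)) t (exp t) ltac:(apply Rmult_comm) (is_exp_Reals t)) as H.
  assert (E : scal (0:R_AbsRing) (exp t : R_NormedModule) = 0) by (exact (Rmult_0_l (exp t))). rewrite E in H.
  eapply is_pseries_ext; [|exact H]. intros n; simpl. unfold PS_scal. change (scal ?a ?b) with (a * b); try change (scal ?a ?b) with (a * b); ring.
Qed.

Lemma pseries_fsum {A} (l : list A) (b : A -> nat -> R) t :
  (forall x, ex_pseries (b x) t) ->
  is_pseries (fun n => fsum l (fun x => b x n)) t (fsum l (fun x => PSeries (b x) t)).
Proof.
  intros Hb. induction l; simpl.
  - apply is_pseries_zero.
  - pose proof (is_pseries_plus (b a) (fun n => fsum l (fun x => b x n)) t _ _ (PSeries_correct _ _ (Hb a)) IHl) as H.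
    change (plus ?a ?b) with (a + b) in H.
    eapply is_pseries_ext; [|exact H]. intros n; reflexivity.
Qed.

Lemma W_deriv G f v t : (forall w, 0 <= f w) ->
  derivable_pt_lim (Wf G f v) t (Mop G (fun w => Wf G f w t) v).
Proof.
  intros Hf. apply is_derive_Reals.
  replace (Mop G (fun w => Wf G f w t) v) with (PSeries (PS_derive (coef G f v)) t).
  { apply is_derive_PSeries, rad; auto. }
  apply is_pseries_unique.
  set (b := fun x n => if adj G v x then coef G f x n else coef G f v n).
  assert (Hb : forall x, ex_pseries (b x) t).
  { intros x; unfold b; destruct (adj G v x); apply CV_radius_inside, rad; auto. }
  pose proof (pseries_fsum (verts G) b t Hb) as H.
  replace (Mop G (fun w => Wf G f w t) v) with (fsum (verts G) (fun x => PSeries (b x) t)).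
  2:{ unfold Mop; rewrite sumV_fsum; apply fsum_ext; intro x; unfold b, Wf; destruct (adj G v x); reflexivity. }
  eapply is_pseries_ext; [|exact H]. intros n. unfold PS_derive, b, coef.
  rewrite (fsum_ext _ _ (fun x => / INR (Factorial.fact n) * (if adj G v x then Mn G f n x else Mn G f n v)))
    by (intros x; destruct (adj G v x); reflexivity).
  rewrite fsum_scal. change (Mn G f (S n) v) with (Mop G (Mn G f n) v).
  unfold Mop; rewrite sumV_fsum. change (Factorial.fact (S n)) with (S n * Factorial.fact n)%nat.
  rewrite mult_INR. pose proof (INR_fact_neq_0 n). pose proof (not_0_INR (S n) (Nat.neq_succ_0 n)).
  match goal with |- ?a = ?b => change (@eq R a b) end. field; auto.
Qed.

Lemma U_deriv G f v t : (forall w, 0 <= f w) ->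
  derivable_pt_lim (Uf G f v) t (lap G (fun w => Uf G f w t) v).
Proof.
  intros Hf.
  assert (E : lap G (fun w => Uf G f w t) v = exp (- NN G * t) * lap G (fun w => Wf G f w t) v)
    by (rewrite <- lap_scal; reflexivity).
  rewrite E.
  assert (D1 : derivable_pt_lim (fun s => exp (- NN G * s)) t (exp (- NN G * t) * (- NN G * 1))).
  { apply (derivable_pt_lim_comp (fun s => - NN G * s) exp).
    - apply (derivable_pt_lim_scal id). apply derivable_pt_lim_id.
    - apply derivable_pt_lim_exp. }
  pose proof (derivable_pt_lim_mult _ _ t _ _ D1 (W_deriv G f v t Hf)) as H.
  rewrite Mop_lap in H.
  replace (exp (- NN G * t) * lap G (fun w => Wf G f w t) v) with
     (exp (- NN G * t) * (- NN G * 1) * Wf G f v t +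
      exp (- NN G * t) * (lap G (fun w => Wf G f w t) v + NN G * Wf G f v t)) by ring.
  exact H.
Qed.

Lemma W_ge G f v t : (forall w, 0 < f w) -> 0 <= t -> f v <= Wf G f v t.
Proof.
  intros Hf Ht. assert (Hf' : forall w, 0 <= f w) by (intros w; specialize (Hf w); lra).
  assert (Hex : ex_series (fun k => coef G f v k * t ^ k)).
  { pose proof (CV_radius_inside _ _ (rad G f v t Hf')) as [l Hl].
    exists l. eapply is_series_ext; [|exact Hl]. intros n; simpl. rewrite pow_n_pow.
    change (scal ?a ?b) with (a * b); try change (scal ?a ?b) with (a * b); ring. }
  unfold Wf, PSeries. rewrite Series_incr_1 by exact Hex.
  assert (H0 : coef G f v 0 * t ^ 0 = f v) by (unfold coef; simpl; field).
  rewrite H0.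
  assert (Hs : 0 <= Series (fun k => coef G f v (S k) * t ^ S k)).
  { replace 0 with (Series (fun _ : nat => 0)).
    - apply Series_le.
      + intros n; split; [lra|]. unfold coef. apply Rmult_le_pos; [apply Rmult_le_pos|].
        * left; apply Rinv_0_lt_compat, INR_fact_lt_0.
        * apply Mn_nonneg; auto.
        * apply pow_le; auto.
      + apply (ex_series_incr_1 (fun k => coef G f v k * t ^ k)); exact Hex.
    - rewrite (Series_ext _ (fun n => 0 * 0)) by (intros; ring). rewrite Series_scal_l. ring. }
  lra.
Qed.

Lemma U_pos G f v t : (forall w, 0 < f w) -> 0 <= t -> 0 < Uf G f v t.
Proof.
  intros Hf Ht. unfold Uf. apply Rmult_lt_0_compat; [apply exp_pos|].
  pose proof (W_ge G f v t Hf Ht); specialize (Hf v); lra.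
Qed.

Lemma U_heat G f : (forall w, 0 < f w) -> heat_solution G (Uf G f).
Proof.
  intros Hf. assert (Hf' : forall w, 0 <= f w) by (intros w; specialize (Hf w); lra).
  exists (fun v t => lap G (fun w => Uf G f w t) v). split; [|split].
  - intros v t Ht. apply (deriv_back (Uf G f v)); auto. apply U_deriv; auto.
  - intros v t Ht. apply cont_conv.
    change (continuity_pt (fun s => fsum (verts G) (fun x => if adj G v x then Uf G f x s - Uf G f v s else 0)) t).
    apply fsum_cont. intros x.
    assert (C : forall y, continuity_pt (Uf G f y) t)
      by (intros y; apply derivable_continuous_pt; exists (lap G (fun w => Uf G f w t) y); apply U_deriv; auto).
    destruct (adj G v x).
    + apply (continuity_pt_minus (Uf G f x) (Uf G f v)); auto.
    + apply continuity_pt_const; intros ? ?; reflexivity.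
  - intros; ring.
Qed.

Lemma U_init G f : (fun w => Uf G f w 0) = f.
Proof.
  apply functional_extensionality; intro w. unfold Uf, Wf. rewrite PSeries_0, Rmult_0_r, exp_0.
  unfold coef; simpl. field.
Qed.

Theorem mainTheorem2 (G : fgraph) (psi dpsi : R -> R) (d : R) :
  C1_pos psi dpsi -> 0 < d ->
  (CD_psi G psi dpsi d <->
   forall u : V G -> R -> R,
     heat_solution G u ->
     (forall v t, 0 <= t -> 0 < u v t) ->
     forall t, 0 <= t -> forall v : V G,
       exists l : R,
         deriv_nonneg (fun s => - u v s * lap_psi G psi (fun w => u w s) v) t l /\
         lap G (fun w => - u w t * lap_psi G psi (fun x => u x t) w) v - l
           >= 2 / d * u v t * (lap_psi G psi (fun w => u w t) v) ^ 2).
Proof.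
  intros HC Hd. split.
  - intros HCD u [ut [Hdu [Hc Heq]]] Hpos t Ht v.
    eexists; split.
    + apply (key G psi dpsi u ut); auto. intros v0 t0 H0; specialize (Heq v0 t0 H0); lra.
    + pose proof (ident G psi dpsi (fun w => u w t) v (Hpos v t Ht)) as I. cbv beta in I.
      rewrite I. specialize (HCD (fun w => u w t) (fun w => Hpos w t Ht) v).
      pose proof (Hpos v t Ht). apply Rge_le in HCD. apply Rle_ge.
      replace (2 / d * u v t * lap_psi G psi (fun w => u w t) v ^ 2)
        with (2 * u v t * (/ d * lap_psi G psi (fun w => u w t) v ^ 2)) by (field; lra).
      apply Rmult_le_compat_l; lra.
  - intros H2 f Hf v.
    assert (Hf' : forall w, 0 <= f w) by (intros w; specialize (Hf w); lra).
    set (u := Uf G f).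
    assert (Hpos : forall v t, 0 <= t -> 0 < u v t) by (intros; apply U_pos; auto).
    destruct (H2 u (U_heat G f Hf) Hpos 0 (Rle_refl 0) v) as [l [Hl Hineq]].
    pose proof (key G psi dpsi u (fun v t => lap G (fun w => u w t) v) HC
      (fun v t Ht => deriv_back (Uf G f v) _ t _ Ht (U_deriv G f v t Hf') (fun _ _ => eq_refl))
      (fun _ _ _ => eq_refl) Hpos 0 (Rle_refl 0) v) as HK.
    rewrite (deriv_unique _ _ _ _ (Rle_refl 0) Hl HK) in Hineq.
    pose proof (ident G psi dpsi (fun w => u w 0) v (Hpos v 0 (Rle_refl 0))) as I. cbv beta in I.
    rewrite I in Hineq.
    assert (Ef : (fun w => u w 0) = f) by apply U_init.
    assert (Ev : u v 0 = f v) by (change ((fun w => u w 0) v = f v); rewrite Ef; reflexivity).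
    rewrite Ef, Ev in Hineq. specialize (Hf v). apply Rge_le in Hineq. apply Rle_ge.
    apply (Rmult_le_reg_l (2 * f v)); [lra|].
    replace (2 * f v * (/ d * lap_psi G psi f v ^ 2)) with (2 / d * f v * lap_psi G psi f v ^ 2) by (field; lra).
    exact Hineq.
Qed.
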